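(* Let $l\geq 1$ and let $\rho_{A_{1}A_{1}'\cdots A_{l}A_{l}'}$ be a density operator on a finite-dimensional tensor-product Hilbert space $\mathcal{H}_{A_1}\otimes\mathcal{H}_{A_1'}\otimes\cdots\otimes\mathcal{H}_{A_l}\otimes\mathcal{H}_{A_l'}$. Then \[ I(A_{1}A_{1}':\cdots:A_{l}A_{l}')_{\rho}-I(A_{1}':\cdots:A_{l}')_{\rho}=\sum_{i=1}^{l}I\big(A_{i};A_{1}^{i-1}A'_{[l]\setminus\{i\}}\,\big|\,A_{i}'\big)_{\rho}, \] where $A_{1}^{i-1}$ denotes the systems $A_{1}\cdots A_{i-1}$ (empty if $i=1$) and $A'_{[l]\setminus\{i\}}$ denotes all of the systems $A_1',\dots,A_l'$ except $A_i'$. Moreover, the expansion may proceed in any order: for every permutation $\pi$ of $\{1,\dots,l\}$, \[ I(A_{1}A_{1}':\cdots:A_{l}A_{l}')_{\rho}-I(A_{1}':\cdots:A_{l}')_{\rho}=\sum_{i=1}^{l}I\big(A_{\pi(i)};A_{\pi(1)}\cdots A_{\pi(i-1)}A'_{[l]\setminus\{\pi(i)\}}\,\big|\,A_{\pi(i)}'\big)_{\rho}. \]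
   Context: All entropies use the natural logarithm. For a state $\sigma$ on system $S$, $H(S)_\sigma=-\operatorname{Tr}\{\sigma\log\sigma\}$; marginal entropies are computed from reduced density operators. The multipartite information of a state on systems $B_1,\dots,B_m$ is $I(B_1:\cdots:B_m)=\sum_{j=1}^m H(B_j)-H(B_1\cdots B_m)$. The conditional quantum mutual information is $I(A;B|C)=H(AC)+H(BC)-H(C)-H(ABC)$. *)

(* Defs.v *)
From HB Require Import structures.
From mathcomp Require Import all_boot all_order all_algebra.
From mathcomp Require Import reals exp.
From mathcomp Require Import complex.
Set Implicit Arguments. Unset Strict Implicit. Unset Printing Implicit Defensive.
Import Order.TTheory GRing.Theory Num.Theory.
Local Open Scope ring_scope.

Section QInfo.
Variable R : realType.
Local Notation C := R[i].

(* Finitely many subsystems indexed by a finType K, subsystem k has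
   Hilbert space C^(d k); the computational basis of the joint space is
   indexed by configurations (one basis index per subsystem). *)
Variables (K : finType) (d : K -> nat).

Definition cfg := {dffun forall k : K, 'I_(d k)}.

Definition subsys (S : {set K}) := {k : K | k \in S}.
Definition cfgS (S : {set K}) := {dffun forall k : subsys S, 'I_(d (val k))}.

Definition restr (S : {set K}) (u : cfg) : cfgS S :=
  [ffun k : subsys S => u (val k)].

(* An operator on the joint space, as its kernel in the product basis. *)
Definition op := cfg -> cfg -> C.

Definition density (rho : op) : Prop :=
  [/\ (forall x y, rho x y = (rho y x)^*),
      (forall v : cfg -> C, 0 <= \sum_x \sum_y (v x)^* * rho x y * v y)
    & \sum_x rho x x = 1].

(* reduced density operator (partial trace over the complement of S) *)
Definition ptrace (S : {set K}) (rho : op) (x y : cfgS S) : C :=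
  \sum_(u : cfg) \sum_(v : cfg)
     (if [&& restr S u == x, restr S v == y & [forall k in ~: S, u k == v k]]
      then rho u v else 0).

Definition mx_of (T : finType) (f : T -> T -> C) : 'M[C]_#|T| :=
  \matrix_(i, j) f (enum_val i) (enum_val j).

End QInfo.

Section Entropy.
Variable R : realType.
Local Notation C := R[i].

(* eigenvalues of a square complex matrix, with multiplicity:
   the roots of its characteristic polynomial *)
Definition spectrum n (A : 'M[C]_n) : seq C :=
  sval (closed_field_poly_normal (char_poly A)).

Definition xlnx (x : R) : R := if x == 0 then 0 else x * ln x.

(* von Neumann entropy H(sigma) = - Tr sigma log sigma
   = - sum over eigenvalues lambda (with multiplicity) of lambda ln lambda;
   eigenvalues of a density operator are real, so we take real parts. *)
Definition vN_entropy n (A : 'M[C]_n) : R :=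
  - \sum_(z <- spectrum A) xlnx (complex.Re z).

Variables (K : finType) (d : K -> nat).

Definition Hs (rho : op R d) (S : {set K}) : R :=
  vN_entropy (mx_of (ptrace rho (S := S))).

Definition multi_info (rho : op R d) m (B : 'I_m -> {set K}) : R :=
  \sum_(j < m) Hs rho (B j) - Hs rho (\bigcup_(j < m) B j).

Definition cmi (rho : op R d) (A B Cs : {set K}) : R :=
  Hs rho (A :|: Cs) + Hs rho (B :|: Cs) - Hs rho Cs - Hs rho (A :|: B :|: Cs).

End Entropy.

Definition sysA l (i : 'I_l) : 'I_l * bool := (i, false).
Definition sysA' l (i : 'I_l) : 'I_l * bool := (i, true).

(* Main.v *)
Require Import Defs.
From HB Require Import structures.
From mathcomp Require Import all_boot all_order all_algebra.
From mathcomp Require Import reals exp.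
From mathcomp Require Import complex.
From mathcomp Require Import fingroup perm.
From mathcomp Require Import ring.
Import Order.TTheory GRing.Theory Num.Theory.
Local Open Scope ring_scope.

Section Key.
Variables (l : nat) (f g : 'I_l -> 'I_l).
Hypotheses (fK : cancel f g) (gK : cancel g f).

Lemma memA k x b : ((x, b) \in [set sysA (f j) | j : 'I_l & (j < k)%N])
   = ~~ b && (g x < k)%N.
Proof.
apply/imsetP/andP => [[j Hj [-> ->]]|[nb Hk]].
  by rewrite fK; move: Hj; rewrite inE.
exists (g x); first by rewrite inE.
by rewrite /sysA gK; move: nb; case: b.
Qed.

Lemma memP' i x b : ((x, b) \in [set sysA' j | j : 'I_l & j != i]) = b && (x != i).
Proof.
apply/imsetP/andP => [[j Hj [-> ->]]|[nb Hk]].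
  by move: Hj; rewrite inE.
by exists x; [rewrite inE | rewrite /sysA'; move: nb; case: b].
Qed.

Lemma memU' x b : ((x, b) \in \bigcup_(j < l) [set sysA' j]) = b.
Proof.
apply/bigcupP/idP => [[j _]|Hb]; first by rewrite inE => /eqP [_ ->].
by exists x => //; rewrite inE /sysA' Hb.
Qed.

Lemma memU x b : ((x, b) \in \bigcup_(j < l) [set sysA j; sysA' j]) = true.
Proof.
apply/bigcupP; exists x => //; rewrite !inE /sysA /sysA'.
by case: b; rewrite eqxx ?orbT.
Qed.

Lemma eqfg x i : (x == f i) = (g x == i).
Proof. by apply/eqP/eqP => [->|<-]; rewrite ?fK ?gK. Qed.

Lemma sum_f (V : zmodType) (F : 'I_l -> V) : \sum_i F (f i) = \sum_i F i.
Proof. by rewrite [RHS](reindex_inj (can_inj fK)). Qed.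

Definition W k : {set 'I_l * bool} :=
  [set sysA (f j) | j : 'I_l & (j < k)%N] :|: \bigcup_(j < l) [set sysA' j].

Lemma W_BC (i : 'I_l) :
  ([set sysA (f j) | j : 'I_l & (j < i)%N] :|: [set sysA' j | j : 'I_l & j != f i])
    :|: [set sysA' (f i)] = W i.
Proof.
apply/setP => -[x b]; rewrite /W !inE memA memP' memU' /sysA' xpair_eqE.
by case: b => //=; case: (x == f i); rewrite ?orbT ?orbF.
Qed.

Lemma W_ABC (i : 'I_l) :
  [set sysA (f i)] :|: ([set sysA (f j) | j : 'I_l & (j < i)%N]
    :|: [set sysA' j | j : 'I_l & j != f i]) :|: [set sysA' (f i)] = W i.+1.
Proof.
apply/setP => -[x b]; rewrite /W !inE !memA memP' memU' /sysA /sysA' !xpair_eqE.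
case: b => /=; first by case: (x == f i); rewrite ?orbT ?orbF.
by rewrite andbF orbF eqfg (ltnS (g x) i) (leq_eqVlt (g x)) eqxx andbT !orbF.
Qed.

Lemma W0 : W 0 = \bigcup_(j < l) [set sysA' j].
Proof.
apply/setP => -[x b]; by rewrite /W !inE memA memU' andbF.
Qed.

Lemma Wl : W l = \bigcup_(j < l) [set sysA j; sysA' j].
Proof.
apply/setP => -[x b]; rewrite /W !inE memA memU' memU ltn_ord.
by case: b.
Qed.

Lemma key (R : realType) (d : 'I_l * bool -> nat) (rho : op R d) :
     multi_info rho (fun j : 'I_l => [set sysA j; sysA' j])
       - multi_info rho (fun j : 'I_l => [set sysA' j])
     = \sum_(i < l)
         cmi rho [set sysA (f i)]
           ([set sysA (f j) | j : 'I_l & (j < i)%N]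
              :|: [set sysA' j | j : 'I_l & j != f i])
           [set sysA' (f i)].
Proof.
rewrite /multi_info /cmi.
set T := fun k => Hs rho (W k).
transitivity (\sum_(i < l) (Hs rho [set sysA (f i); sysA' (f i)]
      - Hs rho [set sysA' (f i)]) - \sum_(0 <= i < l) (T i.+1 - T i)).
  rewrite telescope_sumr // /T W0 Wl sumrB.
  rewrite (@sum_f _ (fun i => Hs rho [set sysA i; sysA' i])).
  rewrite (@sum_f _ (fun i => Hs rho [set sysA' i])).
  ring.
rewrite big_mkord -sumrB; apply: eq_bigr => i _.
rewrite W_BC W_ABC /T; ring.
Qed.

End Key.

Theorem lemma1 (R : realType) (l : nat) (d : 'I_l * bool -> nat)
    (rho : op R d) :
  (1 <= l)%N -> density rho ->
  (multi_info rho (fun j : 'I_l => [set sysA j; sysA' j])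
     - multi_info rho (fun j : 'I_l => [set sysA' j])
   = \sum_(i < l)
       cmi rho [set sysA i]
         ([set sysA j | j : 'I_l & (j < i)%N] :|: [set sysA' j | j : 'I_l & j != i])
         [set sysA' i])
  /\
  (forall pi : 'S_l,
     multi_info rho (fun j : 'I_l => [set sysA j; sysA' j])
       - multi_info rho (fun j : 'I_l => [set sysA' j])
     = \sum_(i < l)
         cmi rho [set sysA (pi i)]
           ([set sysA (pi j) | j : 'I_l & (j < i)%N]
              :|: [set sysA' j | j : 'I_l & j != pi i])
           [set sysA' (pi i)]).
Proof.
move=> _ _; split.
  exact: (@key l id id (fun _ => erefl) (fun _ => erefl)).
move=> pi; exact: (@key l pi (pi^-1)%g (permK pi) (permKV pi)).
Qed.
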